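(* Let $\xi\ge 1$ be a real constant, let $e_b>0$, and let $\mathcal A\subseteq[0,e_b]$ be the range of admissible values of a parameter $a$. For $a\in\mathcal A$ consider the initial triple $(p_X,p_Y,p_Z)=(e_b-a,\;a,\;\xi e_b-a)$. Fix a finite sequence of B steps and P steps whose first step is a B step, and let $(p_X',p_Y',p_Z')$ be the triple obtained by applying this sequence to the initial triple. Define the key generation rate $$R(a)=1-H_2(p_X'+p_Y')-H_2(p_Z'+p_Y').$$ Suppose (i) $e_b<\frac{1+4a}{2(1+\xi)}$ for all $a\in\mathcal A$, and (ii) $e_b<\frac{1}{2\xi}$. Then, for fixed $e_b$ and fixed sequence, $R(a)$ is an increasing function of $a$ on $\mathcal A$.
   Context: $H_2(p)=-p\log_2 p-(1-p)\log_2(1-p)$ is the binary entropy. A B step maps a triple $(p_X,p_Y,p_Z)$ to $(p_X',p_Y',p_Z')$ with $p_X'=(p_X^2+p_Y^2)/p_S$, $p_Y'=2p_Xp_Y/p_S$, $p_Z'=2(1-p_X-p_Y-p_Z)p_Z/p_S$, where $p_S=1-2(p_X+p_Y)(1-p_X-p_Y)$. A P step maps $(p_X,p_Y,p_Z)$, with $p_I=1-p_X-p_Y-p_Z$, to $p_X'=3p_I^2(p_X+p_Y)+6p_Ip_Xp_Z+3p_X^2p_Y+p_X^3$, $p_Y'=6p_Ip_Yp_Z+3p_X(p_Y^2+p_Z^2)+3p_Yp_Z^2+p_Y^3$, $p_Z'=3p_I(p_Y^2+p_Z^2)+6p_Xp_Yp_Z+3p_Y^2p_Z+p_Z^3$.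 (Here $p_X,p_Y,p_Z$ are the probabilities of bit-flip, bit-and-phase-flip, and phase-flip errors of noisy EPR pairs.) *)

(* Defs.v *)
From Stdlib Require Import Reals List.
Open Scope R_scope.

Definition log2 (x : R) : R := ln x / ln 2.

(* binary entropy H_2(p) = -p log2 p - (1-p) log2 (1-p).
   (Stdlib's ln is 0 at 0, so 0 * log2 0 = 0, matching the usual convention.) *)
Definition H2 (p : R) : R := - p * log2 p - (1 - p) * log2 (1 - p).

Record triple := mkTriple { pX : R; pY : R; pZ : R }.

Definition B_step (t : triple) : triple :=
  let x := pX t in let y := pY t in let z := pZ t in
  let pS := 1 - 2 * (x + y) * (1 - x - y) in
  mkTriple ((x ^ 2 + y ^ 2) / pS)
           (2 * x * y / pS)
           (2 * (1 - x - y - z) * z / pS).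

Definition P_step (t : triple) : triple :=
  let x := pX t in let y := pY t in let z := pZ t in
  let pI := 1 - x - y - z in
  mkTriple (3 * pI ^ 2 * (x + y) + 6 * pI * x * z + 3 * x ^ 2 * y + x ^ 3)
           (6 * pI * y * z + 3 * x * (y ^ 2 + z ^ 2) + 3 * y * z ^ 2 + y ^ 3)
           (3 * pI * (y ^ 2 + z ^ 2) + 6 * x * y * z + 3 * y ^ 2 * z + z ^ 3).

Inductive step := StepB | StepP.

Definition apply_step (s : step) (t : triple) : triple :=
  match s with StepB => B_step t | StepP => P_step t end.

Definition apply_seq (l : list step) (t : triple) : triple :=
  fold_left (fun acc s => apply_step s acc) l t.

Definition init_triple (xi eb a : R) : triple := mkTriple (eb - a) a (xi * eb - a).

Definition key_rate (xi eb : R) (l : list step) (a : R) : R :=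
  let t := apply_seq l (init_triple xi eb a) in
  1 - H2 (pX t + pY t) - H2 (pZ t + pY t).

(* Main.v *)
Require Import Defs.
From Stdlib Require Import Reals List Lra Psatz.
From Coquelicot Require Import Coquelicot.
Open Scope R_scope.

Definition dH2 (p : R) : R := (ln (1 - p) - ln p) / ln 2.

Lemma H2_deriv p : 0 < p < 1 -> derivable_pt_lim H2 p (dH2 p).
Proof.
  intros Hp. apply is_derive_Reals.
  assert (L2 : 0 < ln 2) by (pose proof ln_lt_2; lra).
  unfold H2, log2, dH2.
  auto_derive.
  - repeat split; lra.
  - replace (1 + - p) with (1 - p) by ring. field; lra.
Qed.

Lemma H2_incr p q : 0 < p -> p < q -> q <= 1/2 -> H2 p < H2 q.
Proof.
  intros H0 H1 H2'.
  destruct (MVT_cor2 H2 dH2 p q H1) as [c [Hc Hc']].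
  { intros c Hc. apply H2_deriv. lra. }
  assert (L2 : 0 < ln 2) by (pose proof ln_lt_2; lra).
  assert (0 < dH2 c).
  { unfold dH2. apply Rdiv_lt_0_compat; [|lra].
    assert (ln c < ln (1 - c)) by (apply ln_increasing; lra). lra. }
  assert (0 < dH2 c * (q - p)) by (apply Rmult_lt_0_compat; lra).
  lra.
Qed.

Definition U t := 1 - 2 * (pX t + pY t).
Definition V t := 1 - 2 * (pZ t + pY t).
Definition W t := 1 - 2 * (pX t + pZ t).

Lemma B_U t : U (B_step t) = 2 * U t / (1 + U t ^ 2).
Proof.
  destruct t as [x y z]; unfold U, B_step; simpl.
  assert (0 < 1 - 2 * (x + y) * (1 - x - y)) by (pose proof (pow2_ge_0 (2*(x+y)-1)); nra).
  assert (0 < 1 + (1 - 2 * (x + y)) ^ 2) by (pose proof (pow2_ge_0 (1 - 2*(x+y))); nra).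
  field; lra.
Qed.
Lemma B_V t : V (B_step t) = (V t ^ 2 + W t ^ 2) / (1 + U t ^ 2).
Proof.
  destruct t as [x y z]; unfold U, V, W, B_step; simpl.
  assert (0 < 1 - 2 * (x + y) * (1 - x - y)) by (pose proof (pow2_ge_0 (2*(x+y)-1)); nra).
  assert (0 < 1 + (1 - 2 * (x + y)) ^ 2) by (pose proof (pow2_ge_0 (1 - 2*(x+y))); nra).
  field; lra.
Qed.
Lemma B_W t : W (B_step t) = 2 * V t * W t / (1 + U t ^ 2).
Proof.
  destruct t as [x y z]; unfold U, V, W, B_step; simpl.
  assert (0 < 1 - 2 * (x + y) * (1 - x - y)) by (pose proof (pow2_ge_0 (2*(x+y)-1)); nra).
  assert (0 < 1 + (1 - 2 * (x + y)) ^ 2) by (pose proof (pow2_ge_0 (1 - 2*(x+y))); nra).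
  field; lra.
Qed.
Lemma P_U t : U (P_step t) = U t ^ 3.
Proof. destruct t as [x y z]; unfold U, P_step; simpl; ring. Qed.
Lemma P_V t : V (P_step t) = (3 * V t - V t ^ 3) / 2.
Proof. destruct t as [x y z]; unfold V, P_step; simpl; field. Qed.
Lemma P_W t : W (P_step t) = (3 * U t ^ 2 * W t - W t ^ 3) / 2.
Proof. destruct t as [x y z]; unfold U, W, P_step; simpl; field. Qed.

Definition Inv t1 t2 := U t1 = U t2 /\ 0 < U t1 <= 1 /\ 0 <= V t1 /\ V t1 < V t2 /\ V t2 <= 1
  /\ 0 <= W t1 /\ W t1 < W t2 /\ W t2 <= U t1.

Lemma Inv_step s t1 t2 : Inv t1 t2 -> Inv (apply_step s t1) (apply_step s t2).
Proof.
  intros (HU & Hu & Hv1 & Hv12 & Hv2 & Hw1 & Hw12 & Hw2).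
  destruct s; simpl; unfold Inv.
  - rewrite !B_U, !B_V, !B_W, <- HU.
    set (u := U t1) in *. set (v1 := V t1) in *. set (v2 := V t2) in *.
    set (w1 := W t1) in *. set (w2 := W t2) in *.
    assert (Hd : 0 < 1 + u ^ 2) by nra.
    repeat split.
    + apply Rdiv_lt_0_compat; lra.
    + first [apply Rmult_le_reg_r with (1 + u^2) | apply Rmult_lt_reg_r with (1 + u^2)]; [lra|]. unfold Rdiv; rewrite !Rmult_assoc, Rinv_l; nra.
    + first [apply Rmult_le_reg_r with (1 + u^2) | apply Rmult_lt_reg_r with (1 + u^2)]; [lra|]. unfold Rdiv; rewrite !Rmult_assoc, Rinv_l; nra.
    + first [apply Rmult_le_reg_r with (1 + u^2) | apply Rmult_lt_reg_r with (1 + u^2)]; [lra|]. unfold Rdiv; rewrite !Rmult_assoc, Rinv_l; nra.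
    + first [apply Rmult_le_reg_r with (1 + u^2) | apply Rmult_lt_reg_r with (1 + u^2)]; [lra|]. unfold Rdiv; rewrite !Rmult_assoc, Rinv_l; nra.
    + first [apply Rmult_le_reg_r with (1 + u^2) | apply Rmult_lt_reg_r with (1 + u^2)]; [lra|]. unfold Rdiv; rewrite !Rmult_assoc, Rinv_l; nra.
    + first [apply Rmult_le_reg_r with (1 + u^2) | apply Rmult_lt_reg_r with (1 + u^2)]; [lra|]. unfold Rdiv; rewrite !Rmult_assoc, Rinv_l; nra.
    + first [apply Rmult_le_reg_r with (1 + u^2) | apply Rmult_lt_reg_r with (1 + u^2)]; [lra|]. unfold Rdiv; rewrite !Rmult_assoc, Rinv_l; nra.
  - rewrite !P_U, !P_V, !P_W, <- HU.
    set (u := U t1) in *. set (v1 := V t1) in *. set (v2 := V t2) in *.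
    set (w1 := W t1) in *. set (w2 := W t2) in *.
    repeat split.
    + assert (0 < u * u) by nra. nra.
    + assert (0 <= u * u <= 1) by nra. nra.
    + assert (v1 * v1 <= 1) by nra. nra.
    + assert (v1 ^ 2 + v1 * v2 + v2 ^ 2 < 3) by nra.
      assert (0 < (v2 - v1) * (3 - (v1 ^ 2 + v1 * v2 + v2 ^ 2))) by (apply Rmult_lt_0_compat; lra).
      nra.
    + assert (0 <= (1 - v2) ^ 2 * (2 + v2)) by (apply Rmult_le_pos; [apply pow2_ge_0|]; lra). nra.
    + assert (w1 * w1 <= u * u) by nra. assert (0 <= w1 * (3 * u ^ 2 - w1 ^ 2)) by (apply Rmult_le_pos; nra). nra.
    + assert (w1 ^ 2 + w1 * w2 + w2 ^ 2 < 3 * u ^ 2) by nra.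
      assert (0 < (w2 - w1) * (3 * u ^ 2 - (w1 ^ 2 + w1 * w2 + w2 ^ 2))) by (apply Rmult_lt_0_compat; lra).
      nra.
    + assert (0 <= (u - w2) ^ 2 * (2 * u + w2)) by (apply Rmult_le_pos; [apply pow2_ge_0|]; lra). nra.
Qed.

Lemma Inv_seq l : forall t1 t2, Inv t1 t2 -> Inv (apply_seq l t1) (apply_seq l t2).
Proof.
  induction l as [|s l IH]; intros t1 t2 H; simpl; [exact H|].
  apply IH. apply Inv_step. exact H.
Qed.

Lemma H2_pos q : 0 < q <= 1/2 -> 0 < H2 q.
Proof.
  intros Hq. unfold H2, log2.
  assert (L2 : / 2 < ln 2) by exact ln_lt_2.
  assert (ln q < ln 1) by (apply ln_increasing; lra).
  assert (ln (1 - q) <= ln 1).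
  { destruct (Req_dec q (1/2)) as [->|Hn]; [|left; apply ln_increasing; lra].
    replace (1 - 1/2) with (1/2) by field. left; apply ln_increasing; lra. }
  rewrite ln_1 in *.
  assert (0 < - q * ln q) by nra.
  assert (0 <= - (1 - q) * ln (1 - q)) by nra.
  assert (0 < - q * ln q / ln 2) by (apply Rdiv_lt_0_compat; lra).
  assert (0 <= - (1 - q) * ln (1 - q) / ln 2) by (unfold Rdiv; apply Rmult_le_pos; [lra | left; apply Rinv_0_lt_compat; lra]).
  lra.
Qed.

Lemma H2_incr' p q : 0 <= p -> p < q -> q <= 1/2 -> H2 p < H2 q.
Proof.
  intros H0 H1 H3. destruct (Req_dec p 0) as [->|Hn].
  - replace (H2 0) with 0. apply H2_pos; lra.
    assert (L2 : / 2 < ln 2) by exact ln_lt_2.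
    unfold H2, log2. rewrite Rminus_0_r, ln_1. field. lra.
  - apply H2_incr; lra.
Qed.

Theorem theorem3 (xi eb : R) (A : R -> Prop) (rest : list step) :
  1 <= xi ->
  0 < eb ->
  (forall a, A a -> 0 <= a <= eb) ->
  (forall a, A a -> eb < (1 + 4 * a) / (2 * (1 + xi))) ->
  eb < 1 / (2 * xi) ->
  forall a1 a2, A a1 -> A a2 -> a1 < a2 ->
    key_rate xi eb (StepB :: rest) a1 < key_rate xi eb (StepB :: rest) a2.
Proof.
  intros Hxi Heb HA Hi Hii a1 a2 HA1 HA2 H12.
  pose proof (HA a1 HA1) as Ha1. pose proof (HA a2 HA2) as Ha2.
  pose proof (Hi a1 HA1) as Hi1. pose proof (Hi a2 HA2) as Hi2.
  assert (Hw1 : 0 < 1 - 2 * (1 + xi) * eb + 4 * a1).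
  { apply Rmult_lt_compat_r with (r := 2 * (1 + xi)) in Hi1; [|lra].
    unfold Rdiv in Hi1. rewrite Rmult_assoc, Rinv_l in Hi1; lra. }
  assert (Hv : 0 < 1 - 2 * xi * eb).
  { apply Rmult_lt_compat_r with (r := 2 * xi) in Hii; [|lra].
    unfold Rdiv in Hii. rewrite Rmult_assoc, Rinv_l in Hii; lra. }
  set (t1 := init_triple xi eb a1). set (t2 := init_triple xi eb a2).
  assert (HI : Inv (B_step t1) (B_step t2)).
  { unfold Inv. rewrite !B_U, !B_V, !B_W.
    assert (E1 : U t1 = 1 - 2 * eb) by (unfold U, t1, init_triple; simpl; ring).
    assert (E2 : U t2 = 1 - 2 * eb) by (unfold U, t2, init_triple; simpl; ring).
    assert (F1 : V t1 = 1 - 2 * xi * eb) by (unfold V, t1, init_triple; simpl; ring).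
    assert (F2 : V t2 = 1 - 2 * xi * eb) by (unfold V, t2, init_triple; simpl; ring).
    assert (G1 : W t1 = 1 - 2 * (1 + xi) * eb + 4 * a1) by (unfold W, t1, init_triple; simpl; ring).
    assert (G2 : W t2 = 1 - 2 * (1 + xi) * eb + 4 * a2) by (unfold W, t2, init_triple; simpl; ring).
    rewrite E1, E2, F1, F2, G1, G2.
    set (u := 1 - 2 * eb). set (v := 1 - 2 * xi * eb).
    set (w1 := 1 - 2 * (1 + xi) * eb + 4 * a1). set (w2 := 1 - 2 * (1 + xi) * eb + 4 * a2).
    assert (0 < v <= u) by (unfold u, v; nra).
    assert (u < 1) by (unfold u; lra).
    assert (0 < w1 < w2) by (unfold w1, w2; lra).
    assert (w2 <= 1) by (unfold w2; nra).
    assert (Hd : 0 < 1 + u ^ 2) by nra.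
    repeat split.
    + apply Rdiv_lt_0_compat; lra.
    + first [apply Rmult_le_reg_r with (1 + u^2) | apply Rmult_lt_reg_r with (1 + u^2)]; [lra|]. unfold Rdiv; rewrite !Rmult_assoc, Rinv_l; nra.
    + first [apply Rmult_le_reg_r with (1 + u^2) | apply Rmult_lt_reg_r with (1 + u^2)]; [lra|]. unfold Rdiv; rewrite !Rmult_assoc, Rinv_l; nra.
    + first [apply Rmult_le_reg_r with (1 + u^2) | apply Rmult_lt_reg_r with (1 + u^2)]; [lra|]. unfold Rdiv; rewrite !Rmult_assoc, Rinv_l; nra.
    + first [apply Rmult_le_reg_r with (1 + u^2) | apply Rmult_lt_reg_r with (1 + u^2)]; [lra|]. unfold Rdiv; rewrite !Rmult_assoc, Rinv_l; nra.
    + first [apply Rmult_le_reg_r with (1 + u^2) | apply Rmult_lt_reg_r with (1 + u^2)]; [lra|]. unfold Rdiv; rewrite !Rmult_assoc, Rinv_l; nra.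
    + first [apply Rmult_le_reg_r with (1 + u^2) | apply Rmult_lt_reg_r with (1 + u^2)]; [lra|]. unfold Rdiv; rewrite !Rmult_assoc, Rinv_l; nra.
    + first [apply Rmult_le_reg_r with (1 + u^2) | apply Rmult_lt_reg_r with (1 + u^2)]; [lra|]. unfold Rdiv; rewrite !Rmult_assoc, Rinv_l; nra. }
  pose proof (Inv_seq rest _ _ HI) as HF.
  unfold key_rate. fold t1 t2.
  change (apply_seq (StepB :: rest) t1) with (apply_seq rest (B_step t1)).
  change (apply_seq (StepB :: rest) t2) with (apply_seq rest (B_step t2)).
  set (s1 := apply_seq rest (B_step t1)) in *. set (s2 := apply_seq rest (B_step t2)) in *.
  destruct HF as (HU & Hu & Hv1 & Hv12 & Hv2 & _).
  unfold U, V in *.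
  assert (Eb : pX s1 + pY s1 = pX s2 + pY s2) by lra.
  rewrite Eb.
  assert (H2 (pZ s2 + pY s2) < H2 (pZ s1 + pY s1)) by (apply H2_incr'; lra).
  lra.
Qed.
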